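(* Let $W_\Gamma$ be a graph product on a finite graph $\Gamma=(V,E)$ with every vertex group primary or infinite cyclic. Then for every $\sim_\tau$-equivalence class $M\subset V$ that is minimal with respect to $\le_\tau$, the set $M\cup L_M$ is a lower cone with respect to $\le_\tau$. Moreover, if every $G_v$ is finite, then $L_M$ is a lower cone with respect to $\le_\tau$ for every subset $M\subset V$.
   Context: Graph: $\Gamma=(V,E)$, $V$ non-empty finite, $E$ a set of 2-element subsets; $lk(v)=\{x:\{v,x\}\in E\}$, $st(v)=lk(v)\cup\{v\}$. A group is primary if cyclic of order $p^k$, $p$ prime, $k\ge1$. Relation $\le_\tau$ on $V$: $v\le_\tau v$; for $v\neq w$, $v\le_\tau w$ iff either (a) $|G_v|=\infty$ and $lk(v)\subset st(w)$, or (b) $|G_v|=p^k$, $|G_w|=p^\ell$ for the same prime $p$ and $st(v)\subset st(w)$. This is a preorder; $v\sim_\tau w$ iff $v\le_\tau w$ and $w\le_\tau v$; minimality of classes refers to the induced partial order on classes. $X\subset V$ is a lower cone if $t\in X$, $s\in V$, $s\le_\tau t$ imply $s\in X$. For $M\subset V$, $L_M=V\setminus\bigcup_{w\in M}st(w)$ (the vertices adjacent to no vertex of $M$ and not in $M$). *)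

(* Defs.v *)
From mathcomp Require Import all_boot.
Set Implicit Arguments. Unset Strict Implicit. Unset Printing Implicit Defensive.

(* Vertex groups are encoded by their order  o : V -> nat,
   with  o v = 0  meaning G_v is infinite (cyclic) and  o v = n > 0  meaning
   |G_v| = n.  Only the orders enter the definition of <=_tau. *)

Definition simple_graph (V : finType) (e : rel V) : Prop :=
  symmetric e /\ irreflexive e.

Definition primary_order (n : nat) : Prop :=
  exists p k, prime p /\ (1 <= k)%N /\ n = (p ^ k)%N.

Definition vertex_orders_ok (V : finType) (o : V -> nat) : Prop :=
  forall v, o v = 0%N \/ primary_order (o v).

Section Graph.
Variables (V : finType) (e : rel V) (o : V -> nat).

Definition lk (v : V) : {set V} := [set x | e v x].
Definition st (v : V) : {set V} := v |: lk v.

Definition le_tau (v w : V) : Prop :=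
  v = w \/
  (v <> w /\
   ((o v = 0%N /\ lk v \subset st w) \/
    ((exists p k l, [/\ prime p, (1 <= k)%N, (1 <= l)%N,
                        o v = (p ^ k)%N & o w = (p ^ l)%N])
     /\ st v \subset st w))).

Definition equiv_tau (v w : V) : Prop := le_tau v w /\ le_tau w v.

Definition minimal_class (M : {set V}) : Prop :=
  exists v, (forall w, w \in M <-> equiv_tau v w) /\
            (forall u, le_tau u v -> le_tau v u).

Definition lower_cone (X : {set V}) : Prop :=
  forall t s, t \in X -> le_tau s t -> s \in X.

Definition L_of (M : {set V}) : {set V} :=
  [set x | [forall w in M, x \notin st w]].

End Graph.

(* Main.v *)
Require Import Defs.
From mathcomp Require Import all_boot.

Lemma inst (V : finType) (e : rel V) v x : (x \in st e v) = (x == v) || e v x.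
Proof. by rewrite /st /lk !inE. Qed.

Lemma inlk (V : finType) (e : rel V) v x : (x \in lk e v) = e v x.
Proof. by rewrite /lk !inE. Qed.

Lemma pp_eq p q k l : prime p -> prime q -> (1 <= k)%N -> (1 <= l)%N ->
  p ^ k = q ^ l -> p = q.
Proof.
move=> pp pq k1 l1 E.
case: k k1 E => // k _; case: l l1 => // l _ E.
by rewrite -(pdiv_pfactor k pp) E pdiv_pfactor.
Qed.

Lemma le_trans_tau (V : finType) (e : rel V) (o : V -> nat) a b c :
  simple_graph e -> le_tau e o a b -> le_tau e o b c -> le_tau e o a c.
Proof.
move=> [sym irr] [->//|[nab Hab]] [<-|[nbc Hbc]]; first by right.
have [->|nac] := eqVneq a c; first by left.
right; split; first by move/eqP: nac.
case: Hab => [[oa Sab]|[[p [k [l [pp k1 l1 oa ob]]]] Sab]].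
- left; split=> //.
  case: Hbc => [[ob Sbc]|[_ Sbc]]; last first.
    exact: subset_trans Sab Sbc.
  apply/subsetP=> x; rewrite inlk => ax.
  have := subsetP Sab x; rewrite inlk inst => /(_ ax) /orP [/eqP xb|bx].
  + subst x.
    have : a \in st e c by apply: (subsetP Sbc); rewrite inlk sym.
    rewrite inst (negbTE nac) /= => ca.
    have : c \in st e b by apply: (subsetP Sab); rewrite inlk sym.
    rewrite inst => /orP [/eqP cb|bc]; first by subst c; case: nbc.
    by rewrite inst sym bc orbT.
  + by apply: (subsetP Sbc); rewrite inlk.
- case: Hbc => [[ob' _]|[[q [k' [l' [pq k1' l1' ob' oc]]]] Sbc]].
    by move: ob; rewrite ob' => /esym/eqP; rewrite expn_eq0 eqn0Ngt prime_gt0.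
  right; split; last exact: subset_trans Sab Sbc.
  have pq' : p = q by apply: (@pp_eq p q l k' pp pq l1 k1'); rewrite -ob -ob'.
  by subst q; exists p, k, l'.
Qed.

Lemma key (V : finType) (e : rel V) (o : V -> nat) s t w :
  simple_graph e -> s <> t -> le_tau e o s t -> s <> w -> s \in st e w ->
  t \in st e w.
Proof.
move=> [sym irr] nst [//|[_ H]] nsw.
rewrite inst => /orP [/eqP//|ws].
have wl : w \in lk e s by rewrite inlk sym.
have : w \in st e t.
  case: H => [[_ S]|[_ S]]; apply: (subsetP S); first exact: wl.
  by rewrite inst; apply/orP; right; move: wl; rewrite inlk.
by rewrite !inst => /orP [/eqP ->|tw]; rewrite ?eqxx // sym tw orbT.
Qed.

Theorem lemma6p8 (V : finType) (v0 : V) (e : rel V) (o : V -> nat) :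
  simple_graph e ->
  vertex_orders_ok o ->
  (forall M : {set V}, minimal_class e o M ->
     lower_cone e o (M :|: L_of e M))
  /\
  ((forall v, o v <> 0%N) ->
     forall M : {set V}, lower_cone e o (L_of e M)).
Proof.
move=> sg _; split.
- move=> M [v [HM Hmin]] t s; rewrite inE => /orP [tM|tL] Hst.
  + have [_ tv] := (HM t).1 tM.
    have sv := @le_trans_tau _ e o s t v sg Hst tv.
    by rewrite inE; apply/orP; left; apply/(HM s); split=> //; apply: Hmin.
  + have [->|nst] := eqVneq s t; first by rewrite inE tL orbT.
    rewrite inE; apply/orP; case: (boolP (s \in M)) => sM; first by left.
    right; rewrite /L_of inE; apply/forallP=> w; apply/implyP=> wM.
    apply/negP=> sw.
    have nsw : s <> w by move=> E; subst w; rewrite wM in sM.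
    have := @key _ e o s t w sg (elimN eqP nst) Hst nsw sw.
    by move: tL; rewrite /L_of inE => /forallP /(_ w); rewrite wM /= => /negbTE ->.
- move=> fin M t s tL Hst.
  have [->//|nst] := eqVneq s t.
  rewrite /L_of inE; apply/forallP=> w; apply/implyP=> wM.
  apply/negP=> sw.
  have tw : t \in st e w.
    have [E|nsw] := eqVneq s w.
      subst w. case: Hst => [E|[_ [[os _]|[_ S]]]]; first by subst; rewrite eqxx in nst.
        by case: (fin s).
      have : s \in st e t by apply: (subsetP S); rewrite inst eqxx.
      case: sg => sym _.
      by rewrite !inst (negbTE nst) /= sym => ->; rewrite orbT.
    exact: @key _ e o s t w sg (elimN eqP nst) Hst (elimN eqP nsw) sw.
  by move: tL; rewrite /L_of inE => /forallP /(_ w); rewrite wM tw.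
Qed.
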